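(* Let $n\geq 3$ and let $N=(V,A)$ be a proper binary level-1 network on $n$ leaves. Then $2n+1\leq |V|\leq 3n-2$ and $2n+1\leq |A|\leq 3.5(n-1)$. Moreover, if $n=3$ then $|V|=|A|=7$ (so all four bounds are attained) and $N$ is a simple network.
   Context: A leaf of a directed acyclic graph (DAG) is a vertex of in-degree 1 and out-degree 0. For a finite set $X$, a phylogenetic network on $X$ is a DAG (no loops, no multiple arcs) with a unique vertex $\rho_N$ (the root) of in-degree 0, which has out-degree at least 2, whose set of leaves is $X$, and in which every vertex other than the root and the leaves is either a split vertex (in-degree 1, out-degree $\geq 2$) or a hybrid vertex (in-degree $\geq 2$, out-degree $\geq 1$). It is binary if the root and all split vertices have out-degree 2 and every hybrid vertex has in-degree 2 and out-degree 1. $U(N)$ denotes the underlying undirected graph. A binary level-1 network is a binary phylogenetic network in which every biconnected component of $U(N)$ contains at most one hybrid vertex; by standing convention every cycle of $U(N)$ has at least four vertices. A gall of a level-1 network is a biconnected component of $U(N)$ with more than one edge (with the arc directions of $N$). A level-1 network is proper if it has at least one hybrid vertex (equivalently at least one gall). A binary level-1 network is simple if it has exactly one gall and every leaf is adjacent to a vertex of that gall. *)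

(* Defs.v *)
From mathcomp Require Import all_boot.
Set Implicit Arguments. Unset Strict Implicit. Unset Printing Implicit Defensive.

(* A finite directed graph (no multiple arcs by construction) is given by a
   finite vertex type T and an arc relation a : rel T. *)
Section Net.
Variables (T : finType) (a : rel T).

Definition indeg (v : T) : nat := #|[set u | a u v]|.
Definition outdeg (v : T) : nat := #|[set w | a v w]|.

Definition narcs : nat := #|[set p : T * T | a p.1 p.2]|.

Definition acyclic : Prop :=
  (forall v, ~~ a v v) /\ (forall u v, a u v -> ~~ connect a v u).

Definition is_leaf (v : T) : bool := (indeg v == 1) && (outdeg v == 0).
Definition leaves : {set T} := [set v | is_leaf v].
Definition is_split (v : T) : bool := (indeg v == 1) && (2 <= outdeg v).
Definition is_hybrid (v : T) : bool := (2 <= indeg v) && (1 <= outdeg v).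

Definition phylo_network_root (r : T) : Prop :=
  [/\ acyclic,
      indeg r = 0, 2 <= outdeg r,
      (forall v, indeg v = 0 -> v = r) &
      (forall v, v != r -> is_leaf v || is_split v || is_hybrid v)].

Definition phylo_network : Prop := exists r, phylo_network_root r.

Definition binary_network : Prop :=
  exists r, phylo_network_root r /\ outdeg r = 2 /\
    (forall v, is_split v -> outdeg v = 2) /\
    (forall v, is_hybrid v -> indeg v = 2 /\ outdeg v = 1).

Definition uedge : rel T := fun x y => a x y || a y x.

Definition uconnected (S : {set T}) : bool :=
  [forall u in S, forall w in S,
     connect (fun x y => [&& x \in S, y \in S & uedge x y]) u w].

(* S spans a biconnected subgraph: at least two vertices, connected, and
   no cut vertex (this includes a single edge K2). *)
Definition biconnected (S : {set T}) : bool :=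
  [&& 1 < #|S|, uconnected S & [forall v in S, uconnected (S :\ v)]].

(* biconnected components of U(N) (blocks), given by their vertex sets;
   blocks are induced subgraphs *)
Definition bicomponent (S : {set T}) : bool := maxset biconnected S.

Definition nedges_in (S : {set T}) : nat :=
  #|[set p : T * T | [&& p.1 \in S, p.2 \in S & a p.1 p.2]]|.

(* standing convention: every cycle of U(N) has at least four vertices,
   i.e. U(N) has no triangle *)
Definition no_triangle : Prop :=
  forall x y z, uedge x y -> uedge y z -> uedge z x ->
    x = y \/ y = z \/ z = x.

Definition binary_level1 : Prop :=
  [/\ binary_network,
      (forall S, bicomponent S -> #|[set v in S | is_hybrid v]| <= 1) &
      no_triangle].

Definition is_gall (S : {set T}) : bool := bicomponent S && (1 < nedges_in S).

Definition proper_network : Prop := exists v, is_hybrid v.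

Definition simple_network : Prop :=
  binary_level1 /\
  exists G, [/\ is_gall G, (forall G', is_gall G' -> G' = G) &
                (forall x, is_leaf x -> exists2 v, v \in G & uedge x v)].

End Net.

(* Main.v *)
Require Import Defs.
From mathcomp Require Import all_boot zify.
Set Implicit Arguments. Unset Strict Implicit. Unset Printing Implicit Defensive.


Definition Rin (T : finType) (a : rel T) (S : {set T}) : rel T :=
  fun x y => [&& x \in S, y \in S & uedge a x y].

Lemma uedge_sym (T : finType) (a : rel T) : symmetric (uedge a).
Proof. by move=> x y; rewrite /uedge orbC. Qed.

Lemma Rin_sym (T : finType) (a : rel T) (S : {set T}) : symmetric (Rin a S).
Proof. by move=> x y; rewrite /Rin uedge_sym andbCA. Qed.

Lemma Rin_csym (T : finType) (a : rel T) (S : {set T}) x y :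
  connect (Rin a S) x y = connect (Rin a S) y x.
Proof. by apply: sym_connect_sym; apply: Rin_sym. Qed.

Lemma uconP (T : finType) (a : rel T) (S : {set T}) :
  reflect (forall u w, u \in S -> w \in S -> connect (Rin a S) u w) (uconnected a S).
Proof.
apply: (iffP forallP) => [H u w uS wS | H u].
  by move: (H u) => /implyP /(_ uS) /forallP /(_ w) /implyP /(_ wS).
by apply/implyP => uS; apply/forallP => w; apply/implyP => wS; apply: H.
Qed.

Lemma Rin_mono (T : finType) (a : rel T) (S S' : {set T}) x y :
  S \subset S' -> connect (Rin a S) x y -> connect (Rin a S') x y.
Proof.
move=> sub; apply: connect_sub => u w /and3P [uS wS e].
by apply: connect1; rewrite /Rin (subsetP sub _ uS) (subsetP sub _ wS).
Qed.

Lemma uconU (T : finType) (a : rel T) (S S' : {set T}) z :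
  uconnected a S -> uconnected a S' -> z \in S -> z \in S' ->
  uconnected a (S :|: S').
Proof.
move=> /uconP H1 /uconP H2 zS zS'; apply/uconP.
have s1 : S \subset S :|: S' by apply: subsetUl.
have s2 : S' \subset S :|: S' by apply: subsetUr.
have hz : forall u, u \in S :|: S' -> connect (Rin a (S :|: S')) u z.
  move=> u; rewrite inE => /orP [uS|uS].
    by apply: (Rin_mono s1); apply: H1.
  by apply: (Rin_mono s2); apply: H2.
move=> u w uS wS; apply: connect_trans (hz _ uS) _.
by rewrite Rin_csym; apply: hz.
Qed.

Lemma uconD1 (T : finType) (a : rel T) (S : {set T}) u :
  biconnected a S -> uconnected a (S :\ u).
Proof.
case/and3P => _ cS /forall_inP H.
case: (boolP (u \in S)) => uS; first by apply: H.
suff -> : S :\ u = S by [].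
apply/setP => x; rewrite !inE; case: eqP => // ->; by rewrite (negbTE uS).
Qed.

Lemma bicon_union (T : finType) (a : rel T) (S S' : {set T}) :
  biconnected a S -> biconnected a S' -> 1 < #|S :&: S'| ->
  biconnected a (S :|: S').
Proof.
move=> b1 b2 /card_gt1P [x [y [xI yI xy]]].
move: (xI) (yI); rewrite !inE => /andP [xS xS'] /andP [yS yS'].
apply/and3P; split.
- case/and3P: b1 => h _ _; apply: leq_trans h _.
  by apply: subset_leq_card; apply: subsetUl.
- by case/and3P: b1 => _ c1 _; case/and3P: b2 => _ c2 _; apply: uconU c1 c2 xS xS'.
- apply/forall_inP => u _; rewrite setDUl.
  have c1 := uconD1 u b1; have c2 := uconD1 u b2.
  case: (eqVneq x u) => [xu|xu].
    have yu : y != u by rewrite -xu eq_sym.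
    by apply: (uconU (z := y)) => //; rewrite !inE yu.
  by apply: (uconU (z := x)) => //; rewrite !inE xu.
Qed.

Lemma first_step (T : finType) (e : rel T) x z :
  connect e x z -> x != z -> exists y, e x y.
Proof.
case/connectP => [[|y p]] /=; first by move=> _ ->; rewrite eqxx.
by case/andP => exy _ _ _; exists y.
Qed.

Lemma two_nb (T : finType) (a : rel T) (S : {set T}) x :
  (forall v, ~~ a v v) -> biconnected a S -> 2 < #|S| -> x \in S ->
  exists y1 y2, [/\ y1 \in S, y2 \in S, y1 != y2, uedge a x y1 & uedge a x y2].
Proof.
move=> noloop bS /card_gt2P [p [q [r [[pS qS rS] [pq qr rp]]]]] xS.
have hne : forall u, uedge a u u = false.
  by move=> u; rewrite /uedge orbb; apply/negbTE.
have [z [zS zx]] : exists z, z \in S /\ x != z.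
  case: (eqVneq x p) => [->|xp]; last by exists p.
  by exists q.
case/and3P: (bS) => _ /uconP cS _.
have [y1 /and3P [_ y1S e1]] := first_step (cS _ _ xS zS) zx.
have xy1 : x != y1 by apply: contraTneq e1 => ->; rewrite hne.
have [w [wS wx wy]] : exists w, [/\ w \in S, x != w & y1 != w].
  case: (eqVneq x p) => [xp|xp]; case: (eqVneq x q) => [xq|xq];
    case: (eqVneq x r) => [xr|xr]; case: (eqVneq y1 p) => [yp|yp];
    case: (eqVneq y1 q) => [yq|yq]; case: (eqVneq y1 r) => [yr|yr];
    subst; try (by exists p); try (by exists q); try (by exists r);
    by move: pq qr rp; rewrite ?eqxx.
have /uconP cS1 := uconD1 y1 bS.
have xS1 : x \in S :\ y1 by rewrite !inE xy1.
have wS1 : w \in S :\ y1 by rewrite !inE eq_sym wy.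
have [y2 /and3P [_ y2S e2]] := first_step (cS1 _ _ xS1 wS1) wx.
move: y2S; rewrite !inE => /andP [y21 y2S].
by exists y1, y2; split => //; rewrite eq_sym.
Qed.

Lemma path_uconn (T : finType) (a : rel T) (S : {set T}) x p :
  path (uedge a) x p -> all (mem S) (x :: p) ->
  forall u w, u \in x :: p -> w \in x :: p -> connect (Rin a S) u w.
Proof.
move=> pth allS.
have pR : path (Rin a S) x p.
  apply: (sub_in_path (P := mem S) _ allS pth) => u w uS wS e.
  by rewrite /Rin uS wS e.
have hc := path_connect pR.
move=> u w uin win; apply: connect_trans (_ : connect _ u x) _.
  by rewrite Rin_csym; apply: hc.
by apply: hc.
Qed.

Lemma cycle_bicon (T : finType) (a : rel T) (c : seq T) :
  uniq c -> cycle (uedge a) c -> 1 < size c -> biconnected a [set x in c].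
Proof.
move=> uc cc sc.
have card : #|[set x in c]| = size c by rewrite cardsE; apply/card_uniqP.
apply/and3P; split; first by rewrite card.
- case: c uc cc sc {card} => [//|x p] uc cc _.
  apply/uconP => u w; rewrite !in_set => uin win.
  move: cc => /= ; rewrite rcons_path => /andP [pth _].
  apply: (path_uconn pth) => //.
  apply/allP => z zin; change (z \in [set x0 in x :: p]); by rewrite in_set.
- apply/forall_inP => y yc; rewrite inE in yc.
  have := rot_index yc; set i := index y c => hr.
  have : cycle (uedge a) (rot i c) by rewrite rot_cycle.
  have : uniq (rot i c) by rewrite rot_uniq.
  rewrite hr; set q := (drop _ _ ++ _).
  move=> /= /andP [yq uq]; rewrite rcons_path => /andP [pth _].
  have memq : forall z, (z \in [set x in c] :\ y) = (z \in q).
    move=> z; rewrite !inE -(mem_rot i) hr inE.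
    by case: eqP => [->|]; [rewrite (negbTE yq) | ].
  apply/uconP => u w; rewrite !memq.
  case: q pth yq uq memq => [//|z q'] /= /andP [_ pth] _ _ memq uin win.
  apply: (path_uconn pth) => //.
  by apply/allP => t tin; change (t \in [set x in c] :\ y); rewrite memq.
Qed.

Lemma nbcard (T : finType) (a : rel T) x :
  #|[set y | uedge a x y]| <= indeg a x + outdeg a x.
Proof.
have -> : [set y | uedge a x y] = [set y | a x y] :|: [set y | a y x].
  by apply/setP => y; rewrite !inE.
by rewrite cardsU addnC; apply: leq_subr.
Qed.

Lemma reach (T : finType) (a : rel T) (r v : T) :
  (forall u w, a u w -> ~~ connect a w u) ->
  (forall w, indeg a w = 0 -> w = r) ->
  forall x, ~~ connect a v x -> connect (Rin a (setT :\ v)) r x.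
Proof.
move=> acyc ind0.
suff H : forall k x, #|[set y | connect a y x]| < k -> ~~ connect a v x ->
   connect (Rin a (setT :\ v)) r x by move=> x; apply: H (ltnSn _).
elim=> [//|k IH] x hk nvx.
case: (eqVneq x r) => [->//|xr].
have : indeg a x != 0 by apply: contra_neq xr => /ind0.
rewrite /indeg -lt0n => /card_gt0P [y]; rewrite inE => ayx.
have nvy : ~~ connect a v y.
  by apply: contra nvx => H; apply: connect_trans H (connect1 ayx).
have hy : #|[set z | connect a z y]| < k.
  rewrite ltnS in hk; apply: leq_trans _ hk; apply: proper_card; apply/properP; split.
    apply/subsetP => z; rewrite !inE => H; apply: connect_trans H (connect1 ayx).
  by exists x; rewrite !inE ?connect0 // (negbTE (acyc _ _ ayx)).
apply: connect_trans (IH y hy nvy) (connect1 _).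
have xv : x != v by apply: contraNneq nvx => ->.
have yv : y != v by apply: contraNneq nvy => ->.
by rewrite /Rin !inE xv yv /uedge ayx.
Qed.

Lemma path_in (T : finType) (a : rel T) (S : {set T}) x p :
  path (Rin a S) x p -> all (mem S) p.
Proof.
by elim: p x => [//|y p IH] x /= /andP [/and3P [_ yS _] pth]; rewrite yS (IH y).
Qed.

Lemma hyb_cycle (T : finType) (a : rel T) (r v : T) :
  (forall u, ~~ a u u) ->
  (forall u w, a u w -> ~~ connect a w u) ->
  (forall w, indeg a w = 0 -> w = r) ->
  1 < indeg a v ->
  exists c, [/\ uniq c, cycle (uedge a) c, v \in c & 2 < size c].
Proof.
move=> noloop acyc ind0 /card_gt1P [p1 [p2 [h1 h2 p12]]].
rewrite !inE in h1 h2.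
set S0 := setT :\ v.
have c1 := reach acyc ind0 (acyc _ _ h1).
have c2 := reach acyc ind0 (acyc _ _ h2).
have c12 : connect (Rin a S0) p1 p2.
  by apply: connect_trans (c2) ; rewrite Rin_csym.
case/connectP: c12 => q pq lq.
move: lq; case: (shortenP pq) => q' pq' uq' _ lq'.

have p1v : p1 != v by apply: contraTneq h1 => ->; rewrite (negbTE (noloop v)).
exists (v :: p1 :: q'); split.
- rewrite cons_uniq uq' andbT.
  have al := path_in pq'; rewrite inE negb_or eq_sym p1v /=.
  apply/negP => vq; move/allP: al => /(_ _ vq).
  by rewrite /= !inE eqxx.
- rewrite /= rcons_path -lq' /uedge h1 h2 orbT andbT /=.
  by apply: (sub_path _ pq') => x y /and3P [_ _ H].
- by rewrite mem_head.
- case: q' lq' {pq' uq'} => [/= E|]; last by [].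
  by rewrite E eqxx in p12.
Qed.

Lemma two_hyb (T : finType) (a : rel T) (S : {set T}) v w :
  (forall S, bicomponent a S -> #|[set v in S | is_hybrid a v]| <= 1) ->
  biconnected a S -> v \in S -> w \in S -> v != w ->
  is_hybrid a v -> is_hybrid a w -> False.
Proof.
move=> lvl bS vS wS vw hv hw.
case: (maxset_exists bS) => B mB sB.
have := lvl B mB; apply/negP; rewrite -ltnNge; apply/card_gt1P.
by exists v, w; rewrite !inE hv hw (subsetP sB _ vS) (subsetP sB _ wS).
Qed.

Lemma inter_le1 (T : finType) (a : rel T) (S S' : {set T}) v w :
  (forall S, bicomponent a S -> #|[set v in S | is_hybrid a v]| <= 1) ->
  biconnected a S -> biconnected a S' -> v \in S -> w \in S' -> v != w ->
  is_hybrid a v -> is_hybrid a w -> #|S :&: S'| <= 1.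
Proof.
move=> lvl b1 b2 vS wS vw hv hw; rewrite leqNgt; apply/negP => h.
have bU := bicon_union b1 b2 h.
by apply: (two_hyb lvl bU _ _ vw hv hw); rewrite inE ?vS ?wS ?orbT.
Qed.

Lemma card4 (T : finType) (C : {set T}) x y z w :
  #|C| = 3 -> x \in C -> y \in C -> z \in C -> w \in C ->
  x != y -> y != z -> z != x -> [|| w == x, w == y | w == z].
Proof.
move=> c3 xC yC zC wC xy yz zx; apply/negPn/negP; rewrite !negb_or => /and3P [wx wy wz].
have : #|w |: (x |: (y |: [set z]))| <= #|C|.
  apply: subset_leq_card; apply/subsetP => t; rewrite !inE.
  by case/or4P => /eqP ->.
by rewrite c3 !cardsU1 cards1 !inE !negb_or wx wy wz xy yz (eq_sym x z) zx.
Qed.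

Lemma Cex (T : finType) (a : rel T) (r v : T) :
  (forall u, ~~ a u u) ->
  (forall u w, a u w -> ~~ connect a w u) ->
  (forall w, indeg a w = 0 -> w = r) ->
  no_triangle a ->
  is_hybrid a v ->
  exists C : {set T}, [/\ biconnected a C, v \in C & 3 < #|C|].
Proof.
move=> noloop acyc ind0 notri /andP [hv _].
have [c [uc cc vc sc]] := hyb_cycle noloop acyc ind0 hv.
exists [set x in c].
have bC := cycle_bicon uc cc (ltnW sc).
have card : #|[set x in c]| = size c by rewrite cardsE; apply/card_uniqP.
have vC : v \in [set x in c] by rewrite inE.
split => //; rewrite card ltn_neqAle sc andbT; apply/negP => /eqP s3.
rewrite -card in sc s3; move: (esym s3) => c3.
have hne : forall u, uedge a u u = false.
  by move=> u; rewrite /uedge orbb; apply/negbTE.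
have [y1 [y2 [y1C y2C y12 e1 e2]]] := two_nb noloop bC sc vC.
have [z1 [z2 [z1C z2C z12 f1 f2]]] := two_nb noloop bC sc y1C.
have vy1 : v != y1 by apply: contraTneq e1 => ->; rewrite hne.
have vy2 : v != y2 by apply: contraTneq e2 => ->; rewrite hne.
have yz1 : y1 != z1 by apply: contraTneq f1 => ->; rewrite hne.
have yz2 : y1 != z2 by apply: contraTneq f2 => ->; rewrite hne.
have [z [zC fz zv zy]] : exists z, [/\ z \in [set x in c], uedge a y1 z, z != v & z != y1].
  case: (eqVneq z1 v) => [E|z1v]; last by exists z1; split; rewrite // eq_sym.
  exists z2; split => //; last by rewrite eq_sym.
  by rewrite -E eq_sym.
have := card4 c3 vC y1C y2C zC vy1 y12 _; rewrite eq_sym vy2 => /(_ isT).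
rewrite (negbTE zv) (negbTE zy) /= => /eqP E; subst z.
have := notri _ _ _ e1 fz; rewrite uedge_sym => /(_ e2).
by case => [/eqP|[/eqP|/eqP]]; rewrite ?(negbTE vy1) ?(negbTE y12) // eq_sym (negbTE vy2).
Qed.

Lemma disjC (T : finType) (a : rel T) (S S' : {set T}) v w x :
  (forall u, ~~ a u u) ->
  (forall x, indeg a x + outdeg a x <= 3) ->
  (forall S, bicomponent a S -> #|[set v in S | is_hybrid a v]| <= 1) ->
  biconnected a S -> biconnected a S' -> v \in S -> w \in S' -> v != w ->
  is_hybrid a v -> is_hybrid a w -> 2 < #|S| -> 2 < #|S'| ->
  x \in S -> x \in S' -> False.
Proof.
move=> noloop deg3 lvl b1 b2 vS wS' vw hv hw s1 s2 xS xS'.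
have le1 := inter_le1 lvl b1 b2 vS wS' vw hv hw.
have hne : forall u, uedge a u u = false.
  by move=> u; rewrite /uedge orbb; apply/negbTE.
set N := [set y | uedge a x y].
have [y1 [y2 [y1S y2S y12 e1 e2]]] := two_nb noloop b1 s1 xS.
have [z1 [z2 [z1S z2S z12 f1 f2]]] := two_nb noloop b2 s2 xS'.
have dAB : (N :&: S) :&: (N :&: S') = set0.
  apply/setP => t; rewrite !inE; apply/negP => /andP [/andP [et tS] /andP [_ tS']].
  move: le1; apply/negP; rewrite -ltnNge; apply/card_gt1P.
  exists x, t; rewrite !inE xS xS' tS tS'; split => //.
  by apply: contraTneq et => ->; rewrite hne.
have cA : 1 < #|N :&: S| by apply/card_gt1P; exists y1, y2; rewrite !inE e1 e2 y1S y2S.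
have cB : 1 < #|N :&: S'| by apply/card_gt1P; exists z1, z2; rewrite !inE f1 f2 z1S z2S.
have : #|(N :&: S) :|: (N :&: S')| <= #|N|.
  by apply: subset_leq_card; apply/subsetP => t; rewrite !inE => /orP [/andP [] | /andP []].
rewrite cardsU dAB cards0 subn0 => h.
have h4 : 4 <= #|N :&: S| + #|N :&: S'| by apply: (leq_add cA cB).
have := leq_trans (leq_trans h4 (leq_trans h (nbcard a x))) (deg3 x).
by [].
Qed.

Lemma in_Cv (T : finType) (a : rel T) (r v x : T) (S : {set T}) :
  (forall u, ~~ a u u) ->
  (forall S, bicomponent a S -> #|[set v in S | is_hybrid a v]| <= 1) ->
  (forall v, v != r -> is_leaf a v || is_split a v || is_hybrid a v) ->
  biconnected a S -> v \in S -> is_hybrid a v -> 2 < #|S| ->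
  x \in S -> x != v -> (x == r) || is_split a x.
Proof.
move=> noloop lvl types bS vS hv s3 xS xv.
case: (eqVneq x r) => //= xr.
have hh : ~~ is_hybrid a x.
  by apply/negP => hx; apply: (two_hyb lvl bS xS vS xv hx hv).
have hl : ~~ is_leaf a x.
  apply/negP => /andP [/eqP i1 /eqP o0].
  have [y1 [y2 [_ _ y12 e1 e2]]] := two_nb noloop bS s3 xS.
  have : 1 < #|[set y | uedge a x y]|.
    by apply/card_gt1P; exists y1, y2; rewrite !inE e1 e2.
  move=> h; have := leq_trans h (nbcard a x); by rewrite i1 o0.
by move: (types x xr); rewrite (negbTE hh) (negbTE hl) /= orbF.
Qed.

Lemma hyb_bound (T : finType) (a : rel T) (r : T) :
  (forall u, ~~ a u u) ->
  (forall u w, a u w -> ~~ connect a w u) ->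
  (forall w, indeg a w = 0 -> w = r) ->
  (forall x, indeg a x + outdeg a x <= 3) ->
  (forall S, bicomponent a S -> #|[set v in S | is_hybrid a v]| <= 1) ->
  no_triangle a ->
  (forall v, v != r -> is_leaf a v || is_split a v || is_hybrid a v) ->
  3 * #|[set x | is_hybrid a x]| <= 1 + #|[set x | is_split a x]|.
Proof.
move=> noloop acyc ind0 deg3 lvl notri types.
pose P i (C : {set T}) := [&& biconnected a C, i \in C & 3 < #|C|].
pose F i := if is_hybrid a i then odflt set0 [pick C | P i C] :\ i else set0.
have Fspec : forall i, is_hybrid a i ->
    exists C, [/\ biconnected a C, i \in C, 3 < #|C| & F i = C :\ i].
  move=> i hi; rewrite /F hi; case: pickP => [C /and3P [b iC c]|none].
    by exists C.
  have [C [b iC c]] := Cex noloop acyc ind0 notri hi.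
  by move: (none C); rewrite /P b iC c.
have Fsub : forall i, F i \subset [set x | (x == r) || is_split a x].
  move=> i; case: (boolP (is_hybrid a i)) => hi; last by rewrite /F (negbTE hi) sub0set.
  have [C [b iC c ->]] := Fspec i hi.
  apply/subsetP => x; rewrite !inE => /andP [xi xC].
  by apply: (in_Cv noloop lvl types b iC hi (ltnW c) xC xi).
have Fdisj : forall i j, i != j -> [disjoint F i & F j].
  move=> i j ij.
  case: (boolP (is_hybrid a i)) => hi; last by rewrite /F (negbTE hi) -setI_eq0 set0I.
  case: (boolP (is_hybrid a j)) => hj; last by rewrite /F (negbTE hj) -setI_eq0 setI0.
  have [C [b iC c ->]] := Fspec i hi.
  have [C' [b' jC' c' ->]] := Fspec j hj.
  rewrite -setI_eq0; apply/eqP/setP => x; rewrite !inE; apply/negP => /andP [/andP [_ xC] /andP [_ xC']].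
  by apply: (disjC noloop deg3 lvl b b' iC jC' ij hi hj (ltnW c) (ltnW c') xC xC').
have Fc : forall i, is_hybrid a i -> 3 <= #|F i|.
  move=> i hi; have [C [b iC c ->]] := Fspec i hi.
  by rewrite (cardsD1 i C) iC in c.
have sumF : \sum_i #|F i| = #|\bigcup_i F i|.
  rewrite -sum1_card (partition_disjoint_bigcup _ _ Fdisj).
  by apply: eq_bigr => i _; rewrite sum1_card.
have h1 : #|\bigcup_i F i| <= 1 + #|[set x | is_split a x]|.
  apply: leq_trans (_ : #|[set x | (x == r) || is_split a x]| <= _).
    by apply: subset_leq_card; apply/bigcupsP => i _; apply: Fsub.
  have -> : [set x | (x == r) || is_split a x] = r |: [set x | is_split a x].
    by apply/setP => x; rewrite !inE.
  by rewrite cardsU1; apply: leq_add => //; apply: leq_b1.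
apply: leq_trans h1; rewrite -sumF.
rewrite mulnC -sum_nat_cond_const big_mkcond /=.
apply: leq_sum => i _; case: ifP => hi //.
by apply: Fc.
Qed.

Lemma sumP (T : finType) (P : pred T) k :
  \sum_x (if P x then k else 0) = #|[set x | P x]| * k.
Proof. by rewrite -big_mkcond sum_nat_cond_const. Qed.

Lemma narcs_out (T : finType) (a : rel T) : narcs a = \sum_x outdeg a x.
Proof.
rewrite /narcs -sum1dep_card big_mkcond /=.
rewrite -(pair_big xpredT xpredT (fun x y => if a x y then 1 else 0)) /=.
by apply: eq_bigr => x _; rewrite /outdeg sumP muln1.
Qed.

Lemma narcs_in (T : finType) (a : rel T) : narcs a = \sum_x indeg a x.
Proof.
rewrite /narcs -sum1dep_card big_mkcond /=.
rewrite -(pair_big xpredT xpredT (fun x y => if a x y then 1 else 0)) /=.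
rewrite exchange_big /=.
by apply: eq_bigr => x _; rewrite /indeg sumP muln1.
Qed.

Lemma classify (T : finType) (a : rel T) (r : T) :
  phylo_network_root a r -> outdeg a r = 2 ->
  (forall v, is_split a v -> outdeg a v = 2) ->
  (forall v, is_hybrid a v -> indeg a v = 2 /\ outdeg a v = 1) ->
  forall x, [\/ x = r /\ (indeg a x = 0 /\ outdeg a x = 2),
              x != r /\ (indeg a x = 1 /\ outdeg a x = 0),
              x != r /\ (indeg a x = 1 /\ outdeg a x = 2) |
              x != r /\ (indeg a x = 2 /\ outdeg a x = 1)].
Proof.
case=> _ i0 _ _ types o2 hs hh x.
case: (eqVneq x r) => [->|xr]; first by constructor 1.
move: (types x xr); case: (boolP (is_hybrid a x)) => [hx _|_].
  by constructor 4; split => //; apply: hh.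
rewrite orbF; case: (boolP (is_split a x)) => [sx _|_].
  constructor 3; split => //; split; last by apply: hs.
  by case/andP: sx => /eqP.
by rewrite orbF => /andP [/eqP -> /eqP ->]; constructor 2.
Qed.

Lemma arith (n h s V A : nat) :
  3 <= n -> A = 2 + 2 * s + h -> A = n + s + 2 * h -> V = 1 + n + s + h ->
  3 * h <= 1 + s -> 0 < h ->
  [/\ 2 * n + 1 <= V, V <= 3 * n - 2,
      2 * n + 1 <= A, 2 * A <= 7 * (n - 1) &
      (n = 3 -> [/\ V = 7, A = 7, h = 1 & s = 2])].
Proof. move=> *; split; try lia; move=> *; split; lia. Qed.

Lemma sum_card (T : finType) : \sum_(x : T) 1 = #|T|.
Proof. by rewrite sum1_card. Qed.

Lemma gall_big (T : finType) (a : rel T) (G : {set T}) :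
  (forall u, ~~ a u u) -> (forall u w, a u w -> ~~ connect a w u) ->
  1 < nedges_in a G -> 2 < #|G|.
Proof.
move=> noloop acyc /card_gt1P [[p1 p2] [[q1 q2] [pin qin pq]]].
move: pin qin; rewrite !inE /= => /and3P [p1G p2G apq] /and3P [q1G q2G aq].
rewrite ltnNge; apply/negP => le2.
have three : forall x y z, x \in G -> y \in G -> z \in G ->
    x != y -> y != z -> z != x -> False.
  move=> x y z xG yG zG xy yz zx; move: le2; apply/negP; rewrite -ltnNge.
  by apply/card_gt2P; exists x, y, z.
have np : p1 != p2 by apply: contraTneq apq => ->; rewrite (negbTE (noloop _)).
have nq : q1 != q2 by apply: contraTneq aq => ->; rewrite (negbTE (noloop _)).
have hq1 : (q1 == p1) || (q1 == p2).
  apply/negPn/negP; rewrite negb_or => /andP [a1 a2].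
  by apply: (three p1 p2 q1) => //; rewrite eq_sym.
have hq2 : (q2 == p1) || (q2 == p2).
  apply/negPn/negP; rewrite negb_or => /andP [a1 a2].
  by apply: (three p1 p2 q2) => //; rewrite eq_sym.
case/orP: hq1 => /eqP E1; subst q1.
  case/orP: hq2 => /eqP E2; subst q2; first by rewrite eqxx in nq.
  by rewrite eqxx in pq.
case/orP: hq2 => /eqP E2; subst q2; last by rewrite eqxx in nq.
by move: (acyc _ _ apq); rewrite (connect1 aq).
Qed.

Lemma simple3 (T : finType) (a : rel T) (r : T) :
  binary_level1 a -> phylo_network_root a r -> outdeg a r = 2 ->
  (forall v, is_split a v -> outdeg a v = 2) ->
  (forall v, is_hybrid a v -> indeg a v = 2 /\ outdeg a v = 1) ->
  #|[set x | is_hybrid a x]| = 1 -> #|[set x | is_split a x]| = 2 ->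
  simple_network a.
Proof.
move=> BL PR outr hs hh h1 s2.
split => //; case: BL => [_ lvl notri].
have cl := classify PR outr hs hh.
case: PR => [[noloop acyc] ind0r o2 ind0 types].
have deg3 : forall x, indeg a x + outdeg a x <= 3.
  by move=> x; case: (cl x) => [[_ [-> ->]]|[_ [-> ->]]|[_ [-> ->]]|[_ [-> ->]]].
have [v0] : exists v0, v0 \in [set x | is_hybrid a x] by apply/card_gt0P; rewrite h1.
move=> v0H; have hv0 := v0H; rewrite inE in hv0.
have [C [bC v0C c4]] := Cex noloop acyc ind0 notri hv0.
set R := [set x | (x == r) || is_split a x].
have sub : C :\ v0 \subset R.
  apply/subsetP => x; rewrite !inE => /andP [xv xC].
  exact: (in_Cv noloop lvl types bC v0C hv0 (ltnW c4) xC xv).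
have cR : #|R| <= 3.
  have -> : R = r |: [set x | is_split a x] by apply/setP => x; rewrite !inE.
  by rewrite cardsU1 s2; case: (r \notin _).
have eqR : C :\ v0 = R.
  apply/eqP; rewrite eqEcard sub /=; apply: leq_trans cR _.
  by rewrite (cardsD1 v0 C) v0C in c4.
have hyb1 : forall x, is_hybrid a x -> x = v0.
  move=> x hx; have : #|[set x | is_hybrid a x]| <= 1 by rewrite h1.
  move/card_le1P => H; have := H _ v0H x.
  have xH : x \in [set x | is_hybrid a x] by rewrite inE.
  by rewrite xH inE => /esym /eqP.
have nlC : forall x, ~~ is_leaf a x -> x \in C.
  move=> x; case: (cl x) => [[-> _]|[xr [i o]]|[xr [i o]]|[xr [i o]]] nl.
  - have : r \in R by rewrite inE eqxx.
    by rewrite -eqR inE => /andP [].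
  - by rewrite /is_leaf i o in nl.
  - have : x \in R by rewrite inE /is_split i o /= orbT.
    by rewrite -eqR inE => /andP [].
  - by rewrite (hyb1 x) // /is_hybrid i o.
have leafnb : forall (S : {set T}) x, biconnected a S -> 2 < #|S| -> x \in S ->
    ~~ is_leaf a x.
  move=> S x bS s3 xS; apply/negP => /andP [/eqP i1 /eqP o0].
  have [y1 [y2 [_ _ y12 e1 e2]]] := two_nb noloop bS s3 xS.
  have : 1 < #|[set y | uedge a x y]|.
    by apply/card_gt1P; exists y1, y2; rewrite !inE e1 e2.
  move=> h; have := leq_trans h (nbcard a x); by rewrite i1 o0.
case: (maxset_exists bC) => G mG sG.
exists G; split.
- apply/andP; split; first exact: mG.
  have [y1 [y2 [y1C y2C y12 e1 e2]]] := two_nb noloop bC (ltnW c4) v0C.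
  have Gv := subsetP sG _ v0C; have G1 := subsetP sG _ y1C; have G2 := subsetP sG _ y2C.
  have vy1 : v0 != y1.
    by apply: contraTneq e1 => ->; rewrite /uedge orbb (negbTE (noloop _)).
  have vy2 : v0 != y2.
    by apply: contraTneq e2 => ->; rewrite /uedge orbb (negbTE (noloop _)).
  apply/card_gt1P.
  move: e1 e2; rewrite /uedge.
  case: (boolP (a v0 y1)) => A1 /= e1; case: (boolP (a v0 y2)) => A2 /= e2.
  + by exists (v0, y1), (v0, y2); rewrite !inE /= Gv G1 G2 A1 A2 xpair_eqE eqxx (negbTE y12).
  + by exists (v0, y1), (y2, v0); rewrite !inE /= Gv G1 G2 A1 e2 xpair_eqE (negbTE vy2).
  + by exists (y1, v0), (v0, y2); rewrite !inE /= Gv G1 G2 e1 A2 xpair_eqE (eq_sym y1) (negbTE vy1).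
  + by exists (y1, v0), (y2, v0); rewrite !inE /= Gv G1 G2 e1 e2 xpair_eqE (negbTE y12).
- move=> G' /andP [mG' ne'].
  have b' := maxsetp mG'.
  have g3 := gall_big noloop acyc ne'.
  have sub' : G' \subset G.
    apply/subsetP => x xG'; apply: (subsetP sG); apply: nlC.
    exact: (leafnb _ _ b' g3 xG').
  by rewrite (maxsetsup mG' (maxsetp mG) sub').
- move=> x /andP [/eqP i1 _].
  have [p] : exists p, p \in [set u | a u x] by apply/card_gt0P; rewrite -/(indeg a x) i1.
  rewrite inE => apx; exists p; last by rewrite /uedge apx orbT.
  apply: (subsetP sG); apply: nlC; apply/negP => /andP [_ /eqP o0].
  have : x \in [set w | a p w] by rewrite inE.
  move=> xin; have : 0 < outdeg a p by apply/card_gt0P; exists x.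
  by rewrite o0.
Qed.
Theorem mainTheorem1 (T : finType) (a : rel T) (n : nat) :
  3 <= n -> binary_level1 a -> proper_network a -> #|leaves a| = n ->
  [/\ 2 * n + 1 <= #|T|, #|T| <= 3 * n - 2,
      2 * n + 1 <= narcs a, 2 * narcs a <= 7 * (n - 1) &
      (n = 3 -> [/\ #|T| = 7, narcs a = 7 & simple_network a])].
Proof.
move=> n3 BL [v0 hv0] nL.
have BL' := BL.
case: BL => [[r [PR [outr [hs hh]]]] lvl notri].
case: (PR) => [[noloop acyc] ind0r o2 ind0 types].
have cl := classify PR outr hs hh.
have deg3 : forall x, indeg a x + outdeg a x <= 3.
  by move=> x; case: (cl x) => [[_ [-> ->]]|[_ [-> ->]]|[_ [-> ->]]|[_ [-> ->]]].
have hb := hyb_bound noloop acyc ind0 deg3 lvl notri types.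
have po : forall x, outdeg a x = (if x == r then 2 else 0) +
   (if is_split a x then 2 else 0) + (if is_hybrid a x then 1 else 0).
  move=> x; rewrite /is_split /is_hybrid.
  by case: (cl x) => [[-> [-> ->]]|[xr [-> ->]]|[xr [-> ->]]|[xr [-> ->]]];
    rewrite ?eqxx ?(negbTE xr).
have pin : forall x, indeg a x = (if is_leaf a x then 1 else 0) +
   (if is_split a x then 1 else 0) + (if is_hybrid a x then 2 else 0).
  move=> x; rewrite /is_leaf /is_split /is_hybrid.
  by case: (cl x) => [[-> [-> ->]]|[xr [-> ->]]|[xr [-> ->]]|[xr [-> ->]]].
have p1 : forall x, 1 = (if x == r then 1 else 0) + (if is_leaf a x then 1 else 0) +
   (if is_split a x then 1 else 0) + (if is_hybrid a x then 1 else 0).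
  move=> x; rewrite /is_leaf /is_split /is_hybrid.
  by case: (cl x) => [[-> [-> ->]]|[xr [-> ->]]|[xr [-> ->]]|[xr [-> ->]]];
    rewrite ?eqxx ?(negbTE xr).
have r1 : #|[set x | x == r]| = 1.
  have -> : [set x | x == r] = [set r] by apply/setP => x; rewrite !inE.
  by rewrite cards1.
have Aout : narcs a = 2 + 2 * #|[set x | is_split a x]| + #|[set x | is_hybrid a x]|.
  rewrite narcs_out (eq_bigr _ (fun x _ => po x)) !big_split /= !sumP r1.
  by rewrite mul1n muln1 mulnC.
have Ain : narcs a = n + #|[set x | is_split a x]| + 2 * #|[set x | is_hybrid a x]|.
  rewrite narcs_in (eq_bigr _ (fun x _ => pin x)) !big_split /= !sumP -nL.
  by rewrite !muln1 mulnC.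
have V : #|T| = 1 + n + #|[set x | is_split a x]| + #|[set x | is_hybrid a x]|.
  rewrite -sum_card (eq_bigr _ (fun x _ => p1 x)) !big_split /= !sumP -nL r1.
  by rewrite !muln1.
have hpos : 0 < #|[set x | is_hybrid a x]| by apply/card_gt0P; exists v0; rewrite inE.
have [b1 b2 b3 b4 b5] := arith n3 Aout Ain V hb hpos.
split => // e3; have [v7 a7 h1 s2] := b5 e3; split => //.
exact: (simple3 BL' PR outr hs hh h1 s2).
Qed.
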